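(* Let $n\ge 1$ and $\tau_i=-2\sin\frac{i\pi}{2n}$ for $0\le i\le n$. Let $\nu_0=\nu_n=\frac1{\sqrt2}$ and $\nu_j=1$ for $1\le j\le n-1$. Let $\bar S\in\mathbb{R}^{n\times n}$ have columns $\bar{\bm s}_1,\dots,\bar{\bm s}_n$, where $\bar{\bm s}_j=\nu_j\big(\sin\frac{j\pi}{2n},\sin\frac{3j\pi}{2n},\dots,\sin\frac{(2n-1)j\pi}{2n}\big)^{\mathsf T}$. Let $\bar C\in\mathbb{R}^{(n+1)\times(n+1)}$ have columns $\bar{\bm c}_0,\dots,\bar{\bm c}_n$, where $\bar{\bm c}_j=\nu_j\big(\frac1{\sqrt2},\cos\frac{j\pi}{n},\dots,\cos\frac{(n-1)j\pi}{n},\frac{(-1)^j}{\sqrt2}\big)^{\mathsf T}$. Let $\bar M=\mathrm{diag}(\sqrt2,1,\dots,1,\sqrt2)\in\mathbb{R}^{(n+1)\times(n+1)}$, and let $\bar B\in\mathbb{R}^{n\times(n+1)}$ have entries $\bar B_{k,k}=-1$, $\bar B_{k,k+1}=1$ ($1\le k\le n$), other entries zero. Then $$\bar S^{-1}\bar B\bar M\bar C=\bar S^{\mathsf T}\bar B\bar M\bar C^{-1}=\bar\Gamma,$$ where $\bar\Gamma=[\bm 0,\underline{\Lambda}]\in\mathbb{R}^{n\times(n+1)}$, $\bm 0$ is the zero column of length $n$, and $\underline{\Lambda}=\mathrm{diag}(\tau_1,\dots,\tau_n)$. *)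

(* Defs.v *)
From HB Require Import structures.
From mathcomp Require Import all_boot all_order all_algebra.
From mathcomp Require Import reals trigo.
Set Implicit Arguments. Unset Strict Implicit. Unset Printing Implicit Defensive.
Import Order.TTheory GRing.Theory Num.Theory.
Local Open Scope ring_scope.

(* All indices are 0-based ordinals; paper index k (1-based) for rows of
   S, B, Gamma corresponds to ordinal i with k = i+1. *)

Definition nu (R : realType) (n j : nat) : R :=
  if (j == 0)%N || (j == n)%N then 1 / Num.sqrt 2 else 1.

Definition tau (R : realType) (n i : nat) : R :=
  - 2 * sin (i%:R * pi / (2 * n%:R)).

Definition Sbar (R : realType) (n : nat) : 'M[R]_n :=
  \matrix_(i < n, j < n)
    (nu R n j.+1 * sin ((2 * i + 1)%N%:R * (j.+1)%:R * pi / (2 * n%:R))).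

Definition Cbar (R : realType) (n : nat) : 'M[R]_n.+1 :=
  \matrix_(r < n.+1, j < n.+1)
    (nu R n j *
      (if (r == 0 :> nat) then 1 / Num.sqrt 2
       else if (r == n :> nat) then (-1) ^+ j / Num.sqrt 2
       else cos (r%:R * j%:R * pi / n%:R))).

Definition Mbar (R : realType) (n : nat) : 'M[R]_n.+1 :=
  \matrix_(r < n.+1, c < n.+1)
    (if r == c then (if (r == 0 :> nat) || (r == n :> nat) then Num.sqrt 2 else 1)
     else 0).

Definition Bbar (R : realType) (n : nat) : 'M[R]_(n, n.+1) :=
  \matrix_(i < n, c < n.+1)
    (if (c == i :> nat) then -1 else if (c == i.+1 :> nat) then 1 else 0).

Definition Gammabar (R : realType) (n : nat) : 'M[R]_(n, n.+1) :=
  \matrix_(i < n, c < n.+1)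
    (if (c == i.+1 :> nat) then tau R n i.+1 else 0).

(* Main.v *)
Require Import Defs.
From HB Require Import structures.
From mathcomp Require Import all_boot all_order all_algebra.
From mathcomp Require Import reals trigo.
From mathcomp Require Import ring lra zify.
Import Order.TTheory GRing.Theory Num.Theory.
Local Open Scope ring_scope.

Lemma sin_natpi {R : realType} (m : nat) : sin (m%:R * pi) = 0 :> R.
Proof.
elim: m => [|m IH]; first by rewrite mul0r sin0.
by rewrite -addn1 natrD mulrDl mul1r sinDpi IH oppr0.
Qed.

Lemma cos_natpi {R : realType} (m : nat) : cos (m%:R * pi) = (-1) ^+ m :> R.
Proof.
elim: m => [|m IH]; first by rewrite mul0r cos0.
by rewrite -addn1 natrD mulrDl mul1r cosDpi IH exprD expr1 mulrN1.
Qed.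

Lemma sumcos_odd {R : realType} (x : R) N :
  2 * sin x * \sum_(i < N) cos ((2 * i + 1)%N%:R * x) = sin ((2 * N)%N%:R * x).
Proof.
elim: N => [|N IH]; first by rewrite big_ord0 mulr0 mul0r sin0.
rewrite big_ord_recr /= mulrDr IH.
have -> : (2 * N.+1)%N%:R * x = (2 * N + 1)%N%:R * x + x.
  by rewrite ?(natrD, natrM, natrS); ring.
have -> : (2 * N)%N%:R * x = (2 * N + 1)%N%:R * x - x.
  by rewrite ?(natrD, natrM, natrS); ring.
rewrite sinB sinD; ring.
Qed.

Lemma sumcos_int {R : realType} (h : R) N :
  2 * sin h * \sum_(r < N.+1) cos (r%:R * (2 * h)) = sin ((2 * N + 1)%N%:R * h) + sin h.
Proof.
elim: N => [|N IH].
  by rewrite big_ord_recr big_ord0 /= mul0r cos0 add0r mul1r mulr1 -mulr2n mulr_natl.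
rewrite big_ord_recr /= mulrDr IH.
have -> : (2 * N.+1 + 1)%N%:R * h = (N.+1)%:R * (2 * h) + h.
  by rewrite ?(natrD, natrM, natrS); ring.
have -> : (2 * N + 1)%N%:R * h = (N.+1)%:R * (2 * h) - h.
  by rewrite ?(natrD, natrM, natrS); ring.
rewrite sinB sinD; ring.
Qed.

Definition Fs {R : realType} (n : nat) (x : R) := \sum_(i < n) cos ((2 * i + 1)%N%:R * x).

Lemma FsN (R : realType) n (x : R) : Fs n (- x) = Fs n x.
Proof. by apply: eq_bigr => i _; rewrite mulrN cosN. Qed.

Lemma Fs0 (R : realType) n : Fs n (0 : R) = n%:R.
Proof.
rewrite /Fs (eq_bigr (fun _ => 1)); last by move=> i _; rewrite mulr0 cos0.
by rewrite sumr_const card_ord.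
Qed.

Lemma Fs2n (R : realType) n (hn : (0 < n)%N) :
  Fs n ((2 * n)%N%:R * (pi / (2 * n%:R))) = - n%:R :> R.
Proof.
have n0 : n%:R != 0 :> R by rewrite pnatr_eq0 -lt0n.
have -> : (2 * n)%N%:R * (pi / (2 * n%:R)) = 1%:R * pi :> R.
  by rewrite natrM; field.
rewrite /Fs (eq_bigr (fun _ => -1)); last first.
  move=> i _; rewrite mulrA -natrM muln1 cos_natpi exprD expr1 exprM sqrrN !expr1n.
  by rewrite mul1r.
by rewrite sumr_const card_ord mulNrn.
Qed.

Lemma Fsd (R : realType) n (d : nat) (hd : (0 < d < 2 * n)%N) :
  Fs n (d%:R * (pi / (2 * n%:R))) = 0 :> R.
Proof.
case/andP: hd => d0 dn.
have n0 : (0 < n)%N by case: n dn => //; rewrite muln0.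
have nR : n%:R != 0 :> R by rewrite pnatr_eq0 -lt0n.
set x := d%:R * _.
have sx : 0 < sin x.
  apply: sin_gt0_pi; apply/andP; split.
    by rewrite /x mulr_gt0 ?ltr0n // divr_gt0 ?pi_gt0 // mulr_gt0 ?ltr0n.
  rewrite /x mulrA ltr_pdivrMr ?mulr_gt0 ?ltr0n // mulrC ltr_pM2l ?pi_gt0 //.
  by rewrite -natrM ltr_nat.
have := sumcos_odd x n.
have -> : (2 * n)%N%:R * x = d%:R * pi.
  by rewrite /x natrM; field.
rewrite sin_natpi => /eqP; rewrite mulf_eq0 mulf_eq0 (gt_eqF sx) pnatr_eq0 /=.
by move/eqP.
Qed.

Lemma nuS (R : realType) n j :
  nu R n j ^+ 2 = if (j == 0)%N || (j == n)%N then 1 / 2 else 1.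
Proof.
rewrite /nu; case: ifP => _; last by rewrite expr1n.
by rewrite expr_div_n expr1n sqr_sqrtr // ler0n.
Qed.

Lemma nu_split (R : realType) n (hn : (0 < n)%N) (f : nat -> R) :
  \sum_(r < n.+1) nu R n r ^+ 2 * f r =
  \sum_(r < n.+1) f r - f 0%N / 2 - f n / 2.
Proof.
case: n hn => // n _.
rewrite big_ord_recl big_ord_recr [in RHS]big_ord_recl [in RHS]big_ord_recr /=.
rewrite !nuS /= eqxx /=.
rewrite (eq_bigr (fun i : 'I_n => f (bump 0 i))); last first.
  move=> i _; rewrite nuS /=.
  have -> : (bump 0 i == n.+1)%N = false.
    by apply/negbTE; rewrite /bump /= add1n eqSS neq_ltn ltn_ord.
  by rewrite mul1r.
rewrite /bump /= add1n.
by field.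
Qed.

Definition Gs {R : realType} (n : nat) (x : R) :=
  \sum_(r < n.+1) nu R n r ^+ 2 * cos (r%:R * x).

Lemma GsN (R : realType) n (x : R) : Gs n (- x) = Gs n x.
Proof. by apply: eq_bigr => i _; rewrite mulrN cosN. Qed.

Lemma Gs_const (R : realType) n (hn : (0 < n)%N) (x : R) :
  (forall r : nat, cos (r%:R * x) = 1) -> Gs n x = n%:R.
Proof.
move=> h1; rewrite /Gs (@nu_split R n hn (fun r : nat => cos (r%:R * x))) (eq_bigr (fun _ => 1)); last by move=> i _; rewrite h1.
by rewrite sumr_const card_ord !h1 -addn1 natrD; field.
Qed.

Lemma Gs0 (R : realType) n (hn : (0 < n)%N) : Gs n (0 : R) = n%:R.
Proof. by apply: Gs_const => // r; rewrite mulr0 cos0. Qed.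

Lemma Gs2n (R : realType) n (hn : (0 < n)%N) :
  Gs n ((2 * n)%N%:R * (pi / n%:R)) = n%:R :> R.
Proof.
have n0 : n%:R != 0 :> R by rewrite pnatr_eq0 -lt0n.
apply: Gs_const => // r.
have -> : r%:R * ((2 * n)%N%:R * (pi / n%:R)) = (2 * r)%N%:R * pi :> R.
  by rewrite !natrM; field.
by rewrite cos_natpi exprM sqrrN !expr1n.
Qed.

Lemma Gsd (R : realType) n (d : nat) (hd : (0 < d < 2 * n)%N) :
  Gs n (d%:R * (pi / n%:R)) = 0 :> R.
Proof.
case/andP: hd => d0 dn.
have n0 : (0 < n)%N by case: n dn => //; rewrite muln0.
have nR : n%:R != 0 :> R by rewrite pnatr_eq0 -lt0n.
set h : R := d%:R * (pi / (2 * n%:R)).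
have sx : 0 < sin h.
  apply: sin_gt0_pi; apply/andP; split.
    by rewrite /h mulr_gt0 ?ltr0n // divr_gt0 ?pi_gt0 // mulr_gt0 ?ltr0n.
  rewrite /h mulrA ltr_pdivrMr ?mulr_gt0 ?ltr0n // mulrC ltr_pM2l ?pi_gt0 //.
  by rewrite -natrM ltr_nat.
have -> : d%:R * (pi / n%:R) = 2 * h by rewrite /h; field.
rewrite /Gs (@nu_split R n n0 (fun r : nat => cos (r%:R * (2 * h)))) mul0r cos0.
have -> : cos (n%:R * (2 * h)) = (-1) ^+ d.
  by rewrite -cos_natpi /h; congr cos; field.
have := sumcos_int h n.
have -> : (2 * n + 1)%N%:R * h = d%:R * pi + h.
  by rewrite /h natrD natrM; field.
rewrite sinD sin_natpi cos_natpi mul0r add0r => hs.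
have -> : \sum_(r < n.+1) cos (r%:R * (2 * h)) = ((-1) ^+ d + 1) / 2.
  apply: (mulfI (x := 2 * sin h)); first by rewrite mulf_neq0 ?pnatr_eq0 // gt_eqF.
  by rewrite hs; field.
by field.
Qed.


Lemma Fs_sub (R : realType) n (p q : nat) (x : R) :
  Fs n (p%:R * x - q%:R * x) = Fs n ((if (q <= p)%N then p - q else q - p)%N%:R * x).
Proof.
case: leqP => h.
  rewrite natrB; last exact: h.
  by rewrite mulrBl.
have -> : p%:R * x - q%:R * x = - ((q - p)%:R * x).
  rewrite natrB; last exact: ltnW.
  by rewrite mulrBl opprB.
exact: FsN.
Qed.

Lemma Gs_sub (R : realType) n (p q : nat) (x : R) :
  Gs n (p%:R * x - q%:R * x) = Gs n ((if (q <= p)%N then p - q else q - p)%N%:R * x).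
Proof.
case: leqP => h.
  rewrite natrB; last exact: h.
  by rewrite mulrBl.
have -> : p%:R * x - q%:R * x = - ((q - p)%:R * x).
  rewrite natrB; last exact: ltnW.
  by rewrite mulrBl opprB.
exact: GsN.
Qed.

Lemma sinsin_sum (R : realType) n (A B : R) :
  \sum_(i < n) sin ((2 * i + 1)%N%:R * A) * sin ((2 * i + 1)%N%:R * B)
  = (Fs n (A - B) - Fs n (A + B)) / 2.
Proof.
rewrite /Fs -sumrB mulr_suml; apply: eq_bigr => i _.
rewrite mulrBr mulrDr cosB cosD; by field.
Qed.

Lemma coscos_sum (R : realType) n (A B : R) :
  \sum_(r < n.+1) nu R n r ^+ 2 * (cos (r%:R * A) * cos (r%:R * B))
  = (Gs n (A - B) + Gs n (A + B)) / 2.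
Proof.
rewrite /Gs -big_split mulr_suml; apply: eq_bigr => i _.
rewrite /= mulrBr mulrDr cosB cosD; by field.
Qed.

Lemma Sentry (R : realType) n i j :
  Sbar R n i j = nu R n j.+1 * sin ((2 * i + 1)%N%:R * ((j.+1)%:R * (pi / (2 * n%:R)))).
Proof. by rewrite mxE !mulrA. Qed.


Lemma nu_half (R : realType) : 1 / Num.sqrt 2 * (1 / Num.sqrt 2) = 1 / 2 :> R.
Proof.
have s2 : Num.sqrt 2 ^+ 2 = 2 :> R by rewrite sqr_sqrtr // ler0n.
by rewrite -expr2 expr_div_n s2 expr1n.
Qed.

Lemma StS (R : realType) n (hn : (0 < n)%N) :
  (Sbar R n)^T *m Sbar R n = (n%:R / 2)%:M.
Proof.
apply/matrixP => a b; rewrite !mxE.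
pose t : R := pi / (2 * n%:R).
rewrite (eq_bigr (fun i : 'I_n => nu R n a.+1 * nu R n b.+1 *
   (sin ((2 * i + 1)%N%:R * ((a.+1)%:R * t)) * sin ((2 * i + 1)%N%:R * ((b.+1)%:R * t))))); last first.
  by move=> i _; rewrite mxE !Sentry; ring.
rewrite -mulr_sumr sinsin_sum Fs_sub -mulrDl -natrD.
have ha := ltn_ord a; have hb := ltn_ord b.
case: (ltngtP a b) => [lab|lab|eab].
- have -> : (b < a.+1)%N = false by lia.
  rewrite Fsd; last by lia.
  rewrite Fsd; last by lia.
  rewrite -val_eqE /= (ltn_eqF lab) mulr0n; ring.
- have -> : (b < a.+1)%N = true by lia.
  rewrite Fsd; last by lia.
  rewrite Fsd; last by lia.
  rewrite -val_eqE /= (gtn_eqF lab) mulr0n; ring.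
- move: eab => /val_inj eab; subst a; rewrite ltnSn subnn mul0r Fs0 eqxx mulr1n.
  have [bn|bn] := boolP (b.+1 == n).
    have -> : (b.+1 + b.+1 = 2 * n)%N by move/eqP: bn; lia.
    rewrite Fs2n; last exact: hn.
    rewrite /nu bn orbT nu_half.
    by field.
  rewrite Fsd; last by lia.
  rewrite /nu (negbTE bn) /=.
  by field.
Qed.

Lemma nu0 (R : realType) n : nu R n 0 = 1 / Num.sqrt 2.
Proof. by rewrite /nu eqxx. Qed.

Lemma nun (R : realType) n : nu R n n = 1 / Num.sqrt 2.
Proof. by rewrite /nu eqxx orbT. Qed.

Lemma nu_mid (R : realType) n r : r != 0%N -> r != n -> nu R n r = 1.
Proof. by move=> h1 h2; rewrite /nu (negbTE h1) (negbTE h2). Qed.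

Lemma Centry (R : realType) n (hn : (0 < n)%N) r j :
  Cbar R n r j = nu R n r * nu R n j * cos (r%:R * (j%:R * (pi / n%:R))).
Proof.
have nR : n%:R != 0 :> R by rewrite pnatr_eq0 -lt0n.
rewrite mxE.
case: ifP => [/eqP r0|/negbT rn0].
  rewrite r0 mul0r cos0 nu0; ring.
case: ifP => [/eqP rn|/negbT rnn].
  rewrite rn nun.
  have -> : n%:R * (j%:R * (pi / n%:R)) = j%:R * pi :> R by field.
  rewrite cos_natpi; ring.
by rewrite (nu_mid _ _ _ rn0 rnn) mul1r !mulrA.
Qed.

Lemma CC (R : realType) n (hn : (0 < n)%N) :
  Cbar R n *m Cbar R n = (n%:R / 2)%:M.
Proof.
apply/matrixP => a b; rewrite !mxE.
pose s : R := pi / n%:R.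
rewrite (eq_bigr (fun r : 'I_n.+1 => nu R n a * nu R n b *
   (nu R n r ^+ 2 * (cos (r%:R * (a%:R * s)) * cos (r%:R * (b%:R * s)))))); last first.
  by move=> i _; rewrite !Centry // (mulrCA a%:R); ring.
rewrite -mulr_sumr coscos_sum Gs_sub -mulrDl -natrD.
have ha := ltn_ord a; have hb := ltn_ord b.
case: (ltngtP a b) => [lab|lab|eab].
- idtac.
  rewrite Gsd; last by lia.
  rewrite Gsd; last by lia.
  rewrite -val_eqE /= (ltn_eqF lab) mulr0n; ring.
- idtac.
  rewrite Gsd; last by lia.
  rewrite Gsd; last by lia.
  rewrite -val_eqE /= (gtn_eqF lab) mulr0n; ring.
- move: eab => /val_inj eab; subst a; rewrite subnn mul0r Gs0; last exact: hn.
  rewrite eqxx mulr1n.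
  have [b0|b0] := boolP (b == 0 :> nat).
    rewrite (eqP b0) addn0 mul0r Gs0; last exact: hn.
    rewrite nu0 nu_half.
    by field.
  have [bn|bn] := boolP (b == n :> nat).
    have -> : (b + b = 2 * n)%N by move/eqP: bn; lia.
    rewrite Gs2n; last exact: hn.
    rewrite (eqP bn) nun nu_half.
    by field.
  rewrite Gsd; last by lia.
  rewrite (nu_mid _ _ _ b0 bn).
  by field.
Qed.

Lemma MC (R : realType) n (hn : (0 < n)%N) :
  Mbar R n *m Cbar R n = \matrix_(c, j) (nu R n j * cos (c%:R * (j%:R * (pi / n%:R)))).
Proof.
have s0 : Num.sqrt 2 != 0 :> R by rewrite gt_eqF // sqrtr_gt0 ltr0n.
apply/matrixP => c j; rewrite !mxE (bigD1 c) //=.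
rewrite big1 ?addr0; last by move=> r rc; rewrite mxE eq_sym (negbTE rc) mul0r.
rewrite mxE eqxx Centry //.
case: ifP => [/orP[/eqP c0|/eqP cn]|/negbT].
- rewrite c0 nu0. by field.
- rewrite cn nun. by field.
- rewrite negb_or => /andP[h1 h2]; rewrite (nu_mid _ _ _ h1 h2); ring.
Qed.

Lemma BMC (R : realType) n (hn : (0 < n)%N) :
  Bbar R n *m Mbar R n *m Cbar R n = Sbar R n *m Gammabar R n.
Proof.
have nR : n%:R != 0 :> R by rewrite pnatr_eq0 -lt0n.
rewrite -mulmxA MC //.
apply/matrixP => k j; rewrite !mxE.
rewrite (bigD1 (widen_ord (leqnSn n) k)) //=.
rewrite (bigD1 (lift ord0 k)) /=; last by rewrite -val_eqE /= /bump /= add1n neq_ltn ltnSn orbT.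
rewrite big1 ?addr0; last first.
  move=> c /andP[c1 c2]; rewrite !mxE.
  move: c1 c2; rewrite -!val_eqE /= /bump /= add1n => /negbTE -> /negbTE ->.
  by rewrite mul0r.
rewrite !mxE /= eqxx /bump /= add1n eqxx.
have -> : (k.+1 == k)%N = false by lia.
case: j => [[|j'] hj].
- rewrite big1; last by move=> i _; rewrite /Gammabar mxE /= mulr0.
  rewrite !mul0r !mulr0 cos0; ring.
- have hj' : (j' < n)%N by lia.
  rewrite (bigD1 (Ordinal hj')) //= big1 ?addr0; last first.
    move=> i /negbTE ih; rewrite /Gammabar mxE /=.
    have -> : (j'.+1 == i.+1)%N = false.
      by apply/negbTE; move: ih; rewrite -val_eqE /= eqSS eq_sym => ->.
    by rewrite mulr0.
  rewrite /Gammabar mxE /= eqxx Sentry /tau /=.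
  pose t : R := pi / (2 * n%:R).
  pose u : R := (2 * k + 1)%N%:R * ((j'.+1)%:R * t).
  pose v : R := (j'.+1)%:R * t.
  have e1 : (k.+1)%:R * ((j'.+1)%:R * (pi / n%:R)) = u + v.
    by rewrite /u /v /t -addn1 ?(natrD, natrM); field.
  have e2 : k%:R * ((j'.+1)%:R * (pi / n%:R)) = u - v.
    by rewrite /u /v /t ?(natrD, natrM); field.
  have e3 : (j'.+1)%:R * pi / (2 * n%:R) = v by rewrite /v /t mulrA.
  rewrite e1 e2 e3 -/t -/u cosB cosD; ring.
Qed.

Theorem lemma5p1 (R : realType) (n : nat) (hn : (0 < n)%N) :
  Sbar R n \in unitmx /\ Cbar R n \in unitmx /\
  invmx (Sbar R n) *m Bbar R n *m Mbar R n *m Cbar R n = Gammabar R n /\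
  (Sbar R n)^T *m Bbar R n *m Mbar R n *m invmx (Cbar R n) = Gammabar R n.
Proof.
set S := Sbar R n; set C := Cbar R n.
pose c : R := n%:R / 2.
have c0 : c != 0 by rewrite /c mulf_neq0 ?invr_eq0 ?pnatr_eq0 -?lt0n.
have hS : (c^-1 *: S^T) *m S = 1%:M.
  by rewrite -scalemxAl StS // scale_scalar_mx mulVf.
have hC : (c^-1 *: C) *m C = 1%:M.
  by rewrite -scalemxAl CC // scale_scalar_mx mulVf.
have [_ uS] := mulmx1_unit hS.
have [_ uC] := mulmx1_unit hC.
have iS : invmx S = c^-1 *: S^T.
  by rewrite -[RHS]mulmx1 -(mulmxV uS) mulmxA hS mul1mx.
have iC : invmx C = c^-1 *: C.
  by rewrite -[RHS]mulmx1 -(mulmxV uC) mulmxA hC mul1mx.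
have h1 : invmx S *m Bbar R n *m Mbar R n *m C = Gammabar R n.
  have := BMC R n hn; rewrite -!mulmxA -/S -/C => ->; by rewrite mulKmx.
split; first exact: uS.
split; first exact: uC.
split; first exact: h1.
have -> : S^T = c *: invmx S by rewrite iS scalerA mulfV // scale1r.
rewrite iC -!scalemxAl -scalemxAr scalerA mulfV // scale1r.
exact: h1.
Qed.
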